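(* Let $n\ge 3$, $q=\frac{2n}{n-2}$, $\kappa=\frac{n-1}{n}$. Identify $S^1$ with $[-\pi,\pi]$ with endpoints identified, and let $\lambda=-1$ on $(-\pi,0)$, $\lambda=1$ on $(0,\pi)$. Let $N$ be a smooth positive function on $S^1$, $\gamma_N=-\frac{\int_{S^1}\lambda N}{\int_{S^1}N}$, and $t,\eta,\mu\in\mathbb{R}$. For $d>0$ let $\psi_d$ be the unique positive solution in $W^{2,\infty}(S^1)$ of $$-2\kappa q\,d^{-2q/n}\psi_d''-2\eta^2d^{-2q}\psi_d^{-q-1}-\kappa(\mu d^{-q}+\gamma_N+\lambda)^2\psi_d^{-q-1}+\kappa(t+\lambda)^2\psi_d^{q-1}=0,$$ and let $\mathcal{F}(d)=\psi_d(0)$. Suppose $|t|\neq1$ and define $$M_{d,\pm}=\left[\frac{2\eta^2d^{-2q}+\kappa(\mu d^{-q}+\gamma_N\pm1)^2}{\kappa(t\pm1)^2}\right]^{\frac{1}{2q}},\quad m_d=\min(M_{d,+},M_{d,-}),\quad M_d=\max(M_{d,+},M_{d,-}).$$ Then $m_d\le\psi_d\le M_d$ on $S^1$ for all $d>0$, and in particular $m_d\le\mathcal{F}(d)\le M_d$. *)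

(* Defs.v *)
From HB Require Import structures.
From mathcomp Require Import all_boot all_order all_algebra.
From mathcomp Require Import all_classical all_reals all_analysis.
Set Implicit Arguments. Unset Strict Implicit. Unset Printing Implicit Defensive.
Import Order.TTheory GRing.Theory Num.Theory.
Import numFieldNormedType.Exports.
Local Open Scope classical_set_scope.
Local Open Scope ring_scope.

(* Functions on S^1 = R / 2piZ are represented as 2pi-periodic functions on R. *)
Definition periodic2pi {R : realType} (f : R -> R) : Prop :=
  forall x, f (x + 2 * pi) = f x.

(* lambda = -1 on (-pi,0), 1 on (0,pi) (mod 2pi); value 0 on the null set pi Z *)
Definition lam {R : realType} (x : R) : R := Num.sg (sin x).

Definition smooth {R : realType} (f : R -> R) : Prop :=
  forall (k : nat) (x : R), derivable (iter k (fun g => derive1 g) f) x 1.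

Definition gammaN {R : realType} (N : R -> R) : R :=
  - (Rintegral (@lebesgue_measure R) `[- pi, pi] (fun x => lam x * N x))
    / (Rintegral (@lebesgue_measure R) `[- pi, pi] N).

Definition qexp {R : realType} (n : nat) : R := 2 * n%:R / (n%:R - 2).
Definition kap {R : realType} (n : nat) : R := (n%:R - 1) / n%:R.

(* psi belongs to W^{2,oo}(S^1): periodic, C^1 with Lipschitz derivative *)
Definition W2inf {R : realType} (psi : R -> R) : Prop :=
  periodic2pi psi /\ (forall x, derivable psi x 1) /\
  exists C : R, forall x y, `|derive1 psi x - derive1 psi y| <= C * `|x - y|.

(* psi solves the ODE almost everywhere (psi'' is the a.e. derivative of psi') *)
Definition solves_ode {R : realType} (n : nat) (N : R -> R) (t eta mu d : R)
  (psi : R -> R) : Prop :=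
  let q := qexp n in let k := kap n in
  {ae @lebesgue_measure R, forall x,
     derivable (derive1 psi) x 1 /\
     - 2 * k * q * d `^ (- (2 * q / n%:R)) * derive1 (derive1 psi) x
     - 2 * eta ^+ 2 * d `^ (- (2 * q)) * psi x `^ (- q - 1)
     - k * (mu * d `^ (- q) + gammaN N + lam x) ^+ 2 * psi x `^ (- q - 1)
     + k * (t + lam x) ^+ 2 * psi x `^ (q - 1) = 0}.

Definition Mpm {R : realType} (n : nat) (N : R -> R) (t eta mu d s : R) : R :=
  let q := qexp n in let k := kap n in
  ((2 * eta ^+ 2 * d `^ (- (2 * q)) + k * (mu * d `^ (- q) + gammaN N + s) ^+ 2)
    / (k * (t + s) ^+ 2)) `^ (1 / (2 * q)).

(* Main.v *)
Require Import Defs.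
From HB Require Import structures.
From mathcomp Require Import all_boot all_order all_algebra.
From mathcomp Require Import all_classical all_reals all_analysis.
From mathcomp Require Import measurable_realfun.
From mathcomp Require Import ring lra.
Import Order.TTheory GRing.Theory Num.Theory.
Import numFieldNormedType.Exports.

Section S.
Local Open Scope classical_set_scope.
Local Open Scope ring_scope.
Context {R : realType}.
Local Notation mu := (@lebesgue_measure R).

Lemma lip_image_negligible (g : R -> R) (K : R) (K0 : 0 < K)
  (Lg : forall x y, `|g x - g y| <= K * `|x - y|) (N : set R) :
  mu.-negligible N -> mu.-negligible (g @` N).
Proof.
move=> /negligible_outer_measure N0; apply/negligible_outer_measure.
apply/eqP; rewrite eq_le outer_measure_ge0 andbT.
apply/lee_addgt0Pr => e e0; rewrite add0e.
have e2K : 0 < e / (2 * K) by rewrite divr_gt0 // mulr_gt0.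
have : ((wlength idfun)^*%mu N < (e / (2 * K))%:E)%E by rewrite N0 lte_fin.

rewrite outer_measure_open_itv_cover => /ereal_inf_lt[_ [F [Fitv NF] <-]] FK.
have cv : forall A, (wlength idfun)^*%mu A = mu A by move=> A; reflexivity.
pose ab k := sval (cid (Fitv k)).
have Fab k : F k = `](ab k).1, (ab k).2[%classic by rewrite /ab; case: cid.
pose G k := `](g (ab k).1 - K * ((ab k).2 - (ab k).1)), (g (ab k).1 + K * ((ab k).2 - (ab k).1))[%classic.
have sub : g @` N `<=` \bigcup_k G k.
  move=> _ [x Nx <-]; have [k _ Fkx] := NF x Nx; exists k => //.
  move: Fkx; rewrite Fab /G /= !in_itv /= => /andP[ax xb].
  have := Lg x (ab k).1; rewrite [`|x - _|]gtr0_norm ?subr_gt0 // => h.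
  have h2 : K * (x - (ab k).1) < K * ((ab k).2 - (ab k).1) by rewrite ltr_pM2l // ltrD2r.
  have := le_lt_trans h h2; rewrite distrC ltr_distlC //.
apply: (le_trans (le_outer_measure ((wlength idfun)^*%mu) _ _ sub)).
apply: (le_trans (outer_measure_sigma_subadditive _ G)).
apply: (@le_trans _ _ (\sum_(0 <= i <oo) ((2 * K)%:E * wlength idfun (F i)))%E).
  apply: lee_nneseries => [i _ _|i _]; first exact: outer_measure_ge0.

  change (mu (G i) <= (2 * K)%:E * wlength idfun (F i))%E.
  rewrite /G lebesgue_measure_itv /= Fab wlength_itv /=.
  set a := (ab i).1; set b := (ab i).2.
  have [hab|hab] := ltP a b.
    rewrite !ifT ?lte_fin //; last by rewrite ltrD2l -subr_gt0 opprK -mulr2n mulrn_wgt0 // mulr_gt0 // subr_gt0.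
    rewrite -EFinD -EFinB -EFinM lee_fin le_eqVlt; apply/orP; left; apply/eqP; ring.
  rewrite [X in (_ <= _ * X)%E]ifF; last by rewrite lte_fin ltNge hab.
  rewrite mule0 ifF //; apply/negbTE; rewrite -leNgt lee_fin.
  have : K * (b - a) <= 0 by rewrite pmulr_rle0 // subr_le0.
  lra.
rewrite nneseriesZl; last by move=> i _; exact: wlength_ge0.
have -> : e = (2 * K) * (e / (2 * K)) by rewrite mulrC divfK // mulf_neq0 // gt_eqF.
apply: le_trans (lee_wpmul2l _ (ltW FK)) _; first by rewrite lee_fin ltW // mulr_gt0.
by rewrite -EFinM.
Qed.

Lemma itv_not_negligible (S : set R) a b : a < b -> mu.-negligible S ->
  exists x, a < x < b /\ ~ S x.
Proof.
move=> ab [A [mA A0 SA]]; apply/not_existsP => H.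
have sub : `]a, b[%classic `<=` A.
  move=> x /= xab; apply: SA; have := H x; rewrite in_itv /= in xab.
  by move=> /not_andP[]; [rewrite xab|move/contrapT].
have := le_measure mu (_ : _ \in measurable) (_ : _ \in measurable) sub.
move=> /(_ _ _); rewrite !inE => /(_ (measurable_itv _) mA).
have A0p : mu A = 0%E := A0.
have Ale : (mu A <= 0)%E by rewrite A0p.
move=> /le_trans/(_ Ale).
have I : mu `]a, b[%classic = (b - a)%:E.
  by rewrite lebesgue_measure_itv /= lte_fin ab -EFinB.
have Ile : ((b - a)%:E <= mu `]a, b[%classic)%E by rewrite I.
move=> /(le_trans Ile); rewrite lee_fin subr_le0 leNgt ab.
by [].
Qed.

Lemma lip_ae_mono (g : R -> R) (K : R) (K0 : 0 < K)
  (Lg : forall x y, `|g x - g y| <= K * `|x - y|) (N : set R)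
  (hN : mu.-negligible N) (a b : R) : a < b ->
  (forall x, a < x < b -> ~ N x -> derivable g x 1 /\ 0 < derive1 g x) ->
  g a <= g b.
Proof.
move=> ab H; rewrite leNgt; apply/negP => gba.
have [y [/andP[y1 y2] ny]] := itv_not_negligible _ _ _ gba (lip_image_negligible _ _ K0 Lg _ hN).
pose S := [set x | (a <= x <= b) /\ y <= g x].
have Sa : S a by split; [rewrite lexx ltW | exact: ltW].
have ubS : ubound S b by move=> x [/andP[]].
have hS : has_sup S by split; [exists a | exists b].
set s := sup S.
have a_s : a <= s := sup_upper_bound hS Sa.
have sb : s <= b := ge_sup (ex_intro _ a Sa) ubS.
have gsy : y <= g s.
  rewrite leNgt; apply/negP => gs.
  have eps0 : 0 < (y - g s) / K by rewrite divr_gt0 // subr_gt0.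
  have [x Sx hx] := sup_adherent eps0 hS.
  have xs : x <= s := sup_upper_bound hS Sx.
  have := Lg x s; rewrite [`|x - s|]distrC [`|s - x|]ger0_norm ?subr_ge0 // => h.
  have : K * (s - x) < K * ((y - g s) / K) by rewrite ltr_pM2l // ltrBlDr -ltrBlDl.
  rewrite [X in _ < X]mulrC (divfK (lt0r_neq0 K0)) => h2.
  have h3 := le_lt_trans (le_trans (ler_norm _) h) h2.
  by case: Sx => _ yx; lra.
have right x : s < x <= b -> g x < y.
  move=> /andP[sx xb]; rewrite ltNge; apply/negP => yx.
  have : x <= s by apply: (sup_upper_bound hS); split => //; rewrite xb andbT (le_trans a_s) // ltW.
  by rewrite leNgt sx.
have sltb : s < b.
  rewrite lt_neqAle sb andbT; apply/negP => /eqP sbE.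
  by move: gsy; rewrite sbE leNgt y1.
have gsy' : g s <= y.
  rewrite leNgt; apply/negP => ys.
  pose h := Num.min (b - s) ((g s - y) / K).
  have h0 : 0 < h by rewrite lt_min subr_gt0 sltb divr_gt0 // subr_gt0.
  have hb : h <= b - s by rewrite ge_min lexx.
  have hK : K * h <= g s - y.
    by rewrite -ler_pdivlMl // mulrC ge_min lexx orbT.
  have := right (s + h); rewrite ltrDl h0 /= -lerBrDl hb => /(_ isT) gxy.
  have := Lg (s + h) s; rewrite (_ : s + h - s = h); last by rewrite addrAC subrr add0r.
  rewrite [`|h|]gtr0_norm // => Lh.
  move: Lh; rewrite distrC => /(le_trans (ler_norm _)) Lh.
  lra.
have gs : g s = y by apply/eqP; rewrite eq_le gsy' gsy.
have sa : a < s.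
  rewrite lt_neqAle a_s andbT; apply/negP => /eqP asE.
  by move: y2; rewrite asE gs ltxx.
have [dg pos] := H s (introT andP (conj sa sltb)) (fun Ns => ny (ex_intro2 _ _ s Ns gs)).
have cQ : (fun h => h^-1 *: ((g \o shift s) (h *: 1) - g s)) @ 0^' --> derive g s 1 := dg.
rewrite derive1E in pos.
have := cvgr_gt _ cQ 0 pos.
move=> /(_ ltac:(exact: _)).
rewrite near_withinE => /nbhs_ballP[e /= e0 He].
pose h := Num.min e (b - s) / 2.
have m1 : Num.min e (b - s) <= e by rewrite ge_min lexx.
have m2 : Num.min e (b - s) <= b - s by rewrite ge_min lexx orbT.
have m0 : 0 < Num.min e (b - s) by rewrite lt_min e0 subr_gt0 sltb.
have h0 : 0 < h by rewrite /h; lra.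
have he : h < e by rewrite /h; lra.
have hb : s + h <= b by rewrite /h; lra.
have := He h; rewrite /ball /= sub0r normrN gtr0_norm // => /(_ he (lt0r_neq0 h0)).
rewrite [h%:A]mulr1 pmulr_rgt0 ?invr_gt0 // subr_gt0 gs addrC => ygh.
have := right (s + h); rewrite hb ltrDl h0 => /(_ isT).
by rewrite ltNge ltW.
Qed.

Lemma max_principle (f g : R -> R) (L : R) (N : set R) :
  (forall x, f (x + 2 * pi) = f x) ->
  (forall x : R, is_derive x 1 f (g x)) ->
  (exists C : R, forall x y, `|g x - g y| <= C * `|x - y|) ->
  mu.-negligible N ->
  (forall x, ~ N x -> sin x != 0 -> L < f x ->
     derivable g x 1 /\ 0 < derive1 g x) ->
  forall x, f x <= L.
Proof.
move=> per hf [C LC] hN H x1; rewrite leNgt; apply/negP => Lx1.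
pose K := `|C| + 1.
have K0 : 0 < K by rewrite /K ltr_pwDr.
have Lg x y : `|g x - g y| <= K * `|x - y|.
  apply: (le_trans (LC x y)); apply: ler_wpM2r => //.
  by rewrite /K (le_trans (ler_norm C)) // lerDl.
have fder x : derivable f x 1 by case: (hf x).
have fD x : derive f x 1 = g x by case: (hf x).
have fc : continuous f.
  by move=> x; apply: differentiable_continuous; apply/derivable1_diffP.
have pi0 : 0 < pi := pi_gt0 R.
have le12 : x1 - 2 * pi <= x1 + 2 * pi by lra.
have [c cI cmax] := EVT_max le12 (continuous_subspaceT fc).
have [x0 [x0I fx0]] : exists x0, (x1 - pi <= x0 <= x1 + pi) /\ f x0 = f c.
  move: cI; rewrite in_itv /= => /andP[c1 c2].
  have [h1|h1] := leP c (x1 - pi).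
    by exists (c + 2 * pi); split; [apply/andP; split; lra | exact: per].
  have [h2|h2] := leP (x1 + pi) c.
    exists (c - 2 * pi); split; first by apply/andP; split; lra.
    by rewrite -[in RHS](subrK (2 * pi) c) per.
  by exists c; split => //; apply/andP; split; lra.
move: x0I => /andP[x0a x0b].
have loc t : `|t - x0| < pi -> f t <= f x0.
  rewrite distrC ltr_distlC => /andP[t1 t2].
  by rewrite fx0; apply: cmax; rewrite in_itv /=; apply/andP; split; lra.
have fx0L : L < f x0.
  by rewrite fx0 (lt_le_trans Lx1) // cmax // in_itv /=; apply/andP; split; lra.
have g0 : g x0 = 0.
  have ab : x0 - pi <= x0 + pi by lra.
  have x0in : x0 \in `]x0 - pi, x0 + pi[ by rewrite in_itv /=; apply/andP; split; lra.
  have mx : forall t, t \in `]x0 - pi, x0 + pi[ -> f t <= f x0.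
    by move=> t; rewrite in_itv /= => /andP[t1 t2]; apply: loc; rewrite distrC ltr_distlC; apply/andP; split; lra.
  by case: (@derive1_at_max R f (x0 - pi) (x0 + pi) x0 ab (fun t _ => fder t) x0in mx) => _; rewrite fD.
have [d1 d10 Hd1] : exists2 d1 : R, 0 < d1 & forall t, `|t - x0| < d1 -> L < f t.
  have := cvgr_gt _ (fc x0) L fx0L.
  move=> /(_ ltac:(exact: _)) /nbhs_ballP[e /= e0 He]; exists e => // t ht; apply: He.
  by rewrite /ball /= distrC.
have [d2 d20 Hd2] : exists2 d2 : R, 0 < d2 & forall h, 0 < h < d2 -> sin (x0 + h) != 0.
  have [s0|s0] := eqVneq (sin x0) 0.
    exists pi => // h hpi; rewrite sinD s0 mul0r add0r mulf_neq0 //.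
      apply/negP => /eqP c0; have := cos2Dsin2 x0; rewrite c0 s0 !expr2 !mul0r addr0.
      by move=> /esym/eqP; rewrite oner_eq0.
    exact: lt0r_neq0 (sin_gt0_pi hpi).
  have sn : 0 < `|sin x0| by rewrite normr_gt0.
  have := cvgr_dist_lt _ (sin x0) (@continuous_sin R x0) _ sn.
  move=> /(_ ltac:(exact: _)) /nbhs_ballP[e /= e0 He]; exists e => // h /andP[h0 he].
  have : ball x0 e (x0 + h) by rewrite /ball /= opprD addrA subrr sub0r normrN gtr0_norm.
  move=> /He /=; apply: contraTneq => ->; rewrite subr0 ltxx //.
pose dl := Num.min d1 (Num.min d2 pi).
have dl1 : dl <= d1 by rewrite ge_min lexx.
have dl2 : dl <= d2 by rewrite /dl !ge_min lexx orbT.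
have dl3 : dl <= pi by rewrite /dl !ge_min lexx !orbT.
have dl0 : 0 < dl by rewrite /dl !lt_min d10 d20 pi0.
have gpos b : x0 < b < x0 + dl -> 0 <= g b.
  move=> /andP[xb bd]; rewrite -g0.
  apply: (lip_ae_mono _ _ K0 Lg _ hN) => // x /andP[xa xb'] nx.
  apply: H nx _ _.
    have := Hd2 (x - x0); rewrite [x0 + _]addrC subrK; apply; apply/andP; split; lra.
  by apply: Hd1; rewrite gtr0_norm; lra.
pose b' := x0 + dl / 2.
have x0b' : x0 < b' by rewrite /b'; lra.
have fmono t : x0 <= t <= b' -> f x0 <= f t.
  move=> /andP[t1 t2].
  have dfge0 : forall x, x \in `]x0, b'[ -> 0 <= derive1 f x.
    move=> x; rewrite in_itv /= => /andP[xa xb]; rewrite derive1E fD gpos //.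
    by apply/andP; split; rewrite /b' in xb; lra.
  apply: (@ger0_derive1_le_cc R f x0 b' (fun t _ => fder t) dfge0 (continuous_subspaceT fc)).
  - by rewrite in_itv /= lexx ltW.
  - by rewrite in_itv /= t1 t2.
  - exact: t1.
have fconst t : x0 <= t <= b' -> f t = f x0.
  move=> tI; apply/eqP; rewrite eq_le fmono // andbT; apply: loc.
  by move: tI => /andP[t1 t2]; rewrite ger0_norm ?subr_ge0 //; rewrite /b' in t2; lra.
have [t0 [/andP[t01 t02] nt0]] := itv_not_negligible _ _ _ x0b' hN.
have [dg pos] : derivable g t0 1 /\ 0 < derive1 g t0.
  apply: H nt0 _ _.
    have := Hd2 (t0 - x0); rewrite [x0 + _]addrC subrK; apply; apply/andP; split; rewrite /b' in t02; lra.
  by apply: Hd1; rewrite gtr0_norm; rewrite /b' in t02; lra.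
have gz t : x0 < t < b' -> g t = 0.
  move=> tI.
  have ab : x0 <= b' by exact: ltW.
  have tin : t \in `]x0, b'[ by rewrite in_itv.
  have mx : forall u, u \in `]x0, b'[ -> f u <= f t.
    move=> u; rewrite in_itv /= => /andP[u1 u2]; move: tI => /andP[t1 t2].
    rewrite (fconst u) ?(fconst t) //; apply/andP; split; exact: ltW.
  by case: (@derive1_at_max R f x0 b' t ab (fun t _ => fder t) tin mx) => _; rewrite fD.
have nz : \forall t \near t0, g t = cst 0 t.
  apply/nbhs_ballP; exists (Num.min (t0 - x0) (b' - t0)) => /=.
    by rewrite lt_min !subr_gt0 t01 t02.
  move=> u; rewrite /ball /= ltr_distlC => /andP[u1 u2].
  have n1 : Num.min (t0 - x0) (b' - t0) <= t0 - x0 by rewrite ge_min lexx.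
  have n2 : Num.min (t0 - x0) (b' - t0) <= b' - t0 by rewrite ge_min lexx orbT.
  by apply: gz; apply/andP; split; lra.
have := @near_eq_derive R R R g (cst 0) t0 1 nz; rewrite derive_cst -derive1E => g'0.
by move: pos; rewrite g'0 ltxx.
Qed.

Lemma ode_sign (c2 A B T p p2 e : R) : c2 < 0 -> 0 <= A + B -> 0 < T -> 0 < p -> 0 < e ->
  c2 * p2 - A * p `^ (- e - 1) - B * p `^ (- e - 1) + T * p `^ (e - 1) = 0 ->
  (((A + B) / T) `^ (1 / (2 * e)) < p -> 0 < p2) /\
  (p < ((A + B) / T) `^ (1 / (2 * e)) -> p2 < 0).
Proof.
move=> c20 AB0 T0 p0 e0 E.
set P1 := p `^ (- e - 1).
have P10 : 0 < P1 by rewrite /P1 powR_gt0.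
have P2E : p `^ (e - 1) = p `^ (2 * e) * P1.
  rewrite /P1 -powRD; last by rewrite (lt0r_neq0 p0) implybT.
  congr (_ `^ _); ring.
set X := (A + B) / T.
have X0 : 0 <= X by rewrite /X divr_ge0 // ltW.
have AB : A + B = X * T by rewrite /X divfK // lt0r_neq0.
set Y := p `^ (2 * e).
have MX : (X `^ (1 / (2 * e))) `^ (2 * e) = X.
  rewrite -powRrM (_ : 1 / (2 * e) * (2 * e) = 1) ?powRr1 //.
  by rewrite mul1r mulVf // mulf_neq0 // lt0r_neq0.
have key : c2 * p2 = P1 * T * (X - Y).
  have -> : P1 * T * (X - Y) = P1 * (X * T) - T * (Y * P1) by ring.
  rewrite -AB; move: E; rewrite P2E => E.
  rewrite -[c2 * p2]subr0 -E /P1 /Y; ring.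
have e2 : 0 < 2 * e by rewrite mulr_gt0.
split => h.
  have : X < Y.
    by rewrite -MX /Y; apply: gt0_ltr_powR => //; rewrite nnegrE ?powR_ge0 // ltW.
  move=> XY; have : P1 * T * (X - Y) < 0 by rewrite pmulr_rlt0 ?mulr_gt0 // subr_lt0.
  rewrite -key; nra.
have : Y < X.
  by rewrite -MX /Y; apply: gt0_ltr_powR => //; rewrite nnegrE ?powR_ge0 // ltW.
move=> XY; have : 0 < P1 * T * (X - Y) by rewrite mulr_gt0 ?mulr_gt0 // subr_gt0.
rewrite -key; nra.
Qed.
End S.

Local Open Scope ring_scope.

Theorem lemma3p12 (R : realType) (n : nat) (hn : (3 <= n)%N)
  (N : R -> R) (hNper : periodic2pi N) (hNsm : smooth N) (hNpos : forall x, 0 < N x)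
  (t eta mu : R) (ht : `|t| != 1) :
  forall (d : R), 0 < d ->
  forall (psi : R -> R), W2inf psi -> (forall x, 0 < psi x) ->
    solves_ode n N t eta mu d psi ->
    let m_d := Num.min (Mpm n N t eta mu d 1) (Mpm n N t eta mu d (-1)) in
    let M_d := Num.max (Mpm n N t eta mu d 1) (Mpm n N t eta mu d (-1)) in
    (forall x, m_d <= psi x <= M_d) /\ (m_d <= psi 0 <= M_d).
Proof.
move=> d d0 psi [per [pder [C LC]]] ppos hode m_d M_d.
have n3 : (3 : R) <= n%:R by rewrite (ler_nat R 3 n).
have q0 : 0 < qexp n :> R by rewrite /qexp divr_gt0 //; lra.
have k0 : 0 < kap n :> R by rewrite /kap divr_gt0 //; lra.
move: hode; rewrite /solves_ode /= => hN.
case: hN => N0 [mN0 N00 sN0].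
have hN0 : lebesgue_measure.-negligible N0 by exists N0; split.
have Pgood x (nx : ~ N0 x) := contrapT (fun np => nx (sN0 x np)).
have sgn (x : R) : sin x != 0 -> lam x = 1 \/ lam x = -1.
  rewrite /lam => sx0; case: (ltgtP (sin x) 0) => [h|h|h].
  - by right; exact: ltr0_sg.
  - by left; exact: gtr0_sg.
  - by move: sx0; rewrite h eqxx.
have D0 : 0 < d `^ (- (2 * qexp n / n%:R)) by rewrite powR_gt0.
have c2neg : -2 * kap n * qexp n * d `^ (- (2 * qexp n / n%:R)) < 0 :> R.
  have := mulr_gt0 (mulr_gt0 k0 q0) D0; nra.
have AB0 s : 0 <= 2 * eta ^+ 2 * d `^ (- (2 * qexp n)) +
     kap n * (mu * d `^ (- qexp n) + gammaN N + s) ^+ 2 :> R.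
  apply: addr_ge0; [apply: mulr_ge0; [apply: mulr_ge0 => //; exact: sqr_ge0 | exact: powR_ge0] | apply: mulr_ge0; [exact: ltW | exact: sqr_ge0]].
have T0 s : s = 1 \/ s = -1 -> 0 < kap n * (t + s) ^+ 2 :> R.
  move=> hs; rewrite mulr_gt0 // lt_def sqr_ge0 andbT sqrf_eq0.
  apply/negP => /eqP ts; move: ht; case: hs => hs; subst s.
  - by rewrite (_ : t = -1); [rewrite normrN normr1 eqxx | lra].
  - by rewrite (_ : t = 1); [rewrite normr1 eqxx | lra].
have core (x : R) : ~ N0 x -> sin x != 0 -> derivable (derive1 psi) x 1 /\
    ((M_d < psi x -> 0 < derive1 (derive1 psi) x) /\
     (psi x < m_d -> derive1 (derive1 psi) x < 0)).
  move=> nx sx; have [dx E] := Pgood x nx; split => //.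
  have hs := sgn x sx.
  have := ode_sign _ _ _ _ _ _ _ c2neg (AB0 (lam x)) (T0 _ hs) (ppos x) q0 E.
  move=> [h1 h2]; split => h.
    apply: h1; apply: (le_lt_trans _ h); rewrite /M_d.
    by case: hs => ->; rewrite le_max lexx ?orbT.
  apply: h2; apply: (lt_le_trans h); rewrite /m_d.
  by case: hs => ->; rewrite ge_min lexx ?orbT.
have hder (x : R) : is_derive x 1 psi (derive1 psi x).
  by rewrite derive1E; exact: derivableP.
have up (x : R) : psi x <= M_d.
  apply: (max_principle psi (derive1 psi) M_d N0 per hder (ex_intro _ C LC) hN0) => y ny sy hy.
  by have [dy [h1 _]] := core y ny sy; split => //; exact: h1.
have lo (x : R) : m_d <= psi x.
  have := max_principle (- psi) (- derive1 psi) (- m_d) N0.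
  move=> /(_ _ _ _ hN0 _ x); rewrite lerN2; apply.
  - by move=> y; change (- psi (y + 2 * pi) = - psi y); rewrite (per y).
  - by exists C => a b /=; rewrite -opprD normrN; exact: LC.
  - move=> y ny sy hy; have [dy [_ h2]] := core y ny sy.
    split; first exact: derivableN.
    rewrite derive1E deriveN // oppr_gt0 -derive1E; apply: h2.
    by move: hy; rewrite /= ltrN2.
by split => [x|]; rewrite lo up.
Qed.
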